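(* Let $a\in\mathbb{R}$ and $w\in\mathbb{C}\setminus\mathbb{R}$ with $(a,w)\in D_c$, and suppose $\varphi := |\operatorname{Arg}(w)|\in(\pi/2,\pi)$. Then $\tau_c(a,w) > 1$ if and only if one of the following holds: (i) $a \ge 0$ and $|w| < R_2(-a;\varphi)$; (ii) $-M(\varphi) < a < 0$ and $R_1(-a;\varphi) < |w| < R_2(-a;\varphi)$.
   Context: $\operatorname{Arg}(w)\in(-\pi,\pi]$ is the principal argument; $\arccos:[-1,1]\to[0,\pi]$. $D_c := \{(a,w)\in\mathbb{R}\times(\mathbb{C}\setminus\{0\}):\operatorname{Re}(w)<a<|w|\}$, and $\tau_c(a,w) := \frac{1}{\sqrt{|w|^2-a^2}}[|\operatorname{Arg}(w)|-\arccos(a/|w|)]$. For $\varphi\in(\pi/2,\pi)$: $C(\theta;\varphi) := \theta\cot(\theta-\varphi)$ on $[0,\varphi)$; $S(\varphi)\in(0,\varphi)$ is the unique solution of $\sin(2\theta-2\varphi) = 2\theta$; $C(\cdot;\varphi)$ is strictly increasing on $[0,S(\varphi)]$ and strictly decreasing on $[S(\varphi),\varphi)$ with maximum $M(\varphi) := \cos^2(S(\varphi)-\varphi)$, $C(0;\varphi)=0$, and $C(\theta;\varphi)\to-\infty$ as $\theta\uparrow\varphi$. $C_1^{-1}(\cdot;\varphi):[0,M(\varphi)]\to[0,S(\varphi)]$ and $C_2^{-1}(\cdot;\varphi):(-\infty,M(\varphi)]\to[S(\varphi),\varphi)$ are the inverses of the restrictions of $C(\cdot;\varphi)$ to $[0,S(\varphi)]$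 and $[S(\varphi),\varphi)$. $R_j(r;\varphi) := -C_j^{-1}(r;\varphi)/\sin(C_j^{-1}(r;\varphi)-\varphi)$ for $j=1,2$ on the respective domains. *)

(* Defs.v *)
From Stdlib Require Import Reals Lra ClassicalEpsilon.
From Coquelicot Require Import Coquelicot.
Open Scope R_scope.

Definition Arg (w : C) : R :=
  epsilon (inhabits 0)
    (fun t => -PI < t <= PI /\ w = (Cmod w * cos t, Cmod w * sin t)%R).

Definition D_c (a : R) (w : C) : Prop :=
  w <> 0%C /\ Re w < a < Cmod w.

Definition tau_c (a : R) (w : C) : R :=
  / sqrt (Cmod w ^ 2 - a ^ 2) * (Rabs (Arg w) - acos (a / Cmod w)).

Definition Cfun (theta phi : R) : R := theta * (cos (theta - phi) / sin (theta - phi)).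

Definition S (phi : R) : R :=
  epsilon (inhabits 0)
    (fun t => 0 < t < phi /\ sin (2 * t - 2 * phi) = 2 * t).

Definition M (phi : R) : R := (cos (S phi - phi)) ^ 2.

Definition C1inv (r phi : R) : R :=
  epsilon (inhabits 0) (fun t => 0 <= t <= S phi /\ Cfun t phi = r).

Definition C2inv (r phi : R) : R :=
  epsilon (inhabits 0) (fun t => S phi <= t < phi /\ Cfun t phi = r).

Definition R_1 (r phi : R) : R := - C1inv r phi / sin (C1inv r phi - phi).
Definition R_2 (r phi : R) : R := - C2inv r phi / sin (C2inv r phi - phi).

(* Main.v *)
Require Import Defs.
From Stdlib Require Import Reals Lra ClassicalEpsilon Ranalysis5.
From Coquelicot Require Import Coquelicot.
Open Scope R_scope.

Definition fS (phi t : R) := sin (2 * t - 2 * phi) - 2 * t.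

Lemma sin_neg_lt phi t : 0 <= t < phi -> phi < PI -> sin (t - phi) < 0.
Proof. intros; apply sin_lt_0_var; lra. Qed.

Lemma sin_bound_d d : 0 < d -> - d < sin d < d.
Proof.
  intros Hd; split; [|apply sin_lt_x; lra].
  destruct (Rle_dec d PI).
  - pose proof (sin_ge_0 d ltac:(lra) r); lra.
  - pose proof (SIN_bound d); pose proof PI2_3_2; lra.
Qed.

Lemma fS_decr phi x y : x < y -> fS phi y < fS phi x.
Proof.
  intros Hxy; unfold fS.
  pose proof (form4 (2*y-2*phi) (2*x-2*phi)) as F.
  replace ((2 * y - 2 * phi - (2 * x - 2 * phi)) / 2) with (y - x) in F by field.
  set (c := cos _) in F. pose proof (COS_bound ((2 * y - 2 * phi + (2 * x - 2 * phi)) / 2)).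
  fold c in H.
  pose proof (sin_bound_d (y-x) ltac:(lra)).
  destruct (Rle_dec 0 (sin (y-x))); nra.
Qed.

Lemma is_derive_fS phi t : is_derive (fS phi) t (2 * cos (2*t - 2*phi) - 2).
Proof. unfold fS; auto_derive; auto. unfold Rminus; ring. Qed.

Lemma cont_of_derive f t l : is_derive f t l -> continuity_pt f t.
Proof.
  intro H. apply is_derive_Reals in H.
  apply derivable_continuous_pt. exact (exist _ l H).
Qed.

Lemma S_spec phi : PI/2 < phi < PI -> 0 < S phi < phi /\ sin (2 * S phi - 2 * phi) = 2 * S phi.
Proof.
  intros Hp. unfold S. apply epsilon_spec.
  assert (H0 : fS phi 0 > 0).
  { unfold fS. replace (2*0-2*phi) with (-(2*phi)) by ring. rewrite sin_neg.
    pose proof (sin_lt_0 (2*phi) ltac:(lra) ltac:(lra)); lra. }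
  assert (H1 : fS phi phi < 0).
  { unfold fS. replace (2*phi-2*phi) with 0 by ring. rewrite sin_0. lra. }
  destruct (IVT_interv (fun t => - fS phi t) 0 phi) as [z [Hz Hfz]].
  - intros. apply cont_of_derive with (l := -(2 * cos (2*a - 2*phi) - 2)).
    apply (is_derive_opp (fS phi)). apply is_derive_fS.
  - lra.
  - lra.
  - lra.
  - exists z. assert (z <> 0) by (intro; subst; lra).
    assert (z <> phi) by (intro; subst; lra).
    unfold fS in Hfz. split; lra.
Qed.

Lemma is_derive_C phi c : sin (c - phi) <> 0 ->
  is_derive (fun t => Cfun t phi) c (fS phi c / (2 * sin (c - phi) ^ 2)).
Proof.
  intros Hs. unfold Cfun, fS. auto_derive; auto.
  replace (2 * c - 2 * phi) with (2 * (c - phi)) by ring. rewrite sin_2a.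
  pose proof (sin2_cos2 (c - phi)). unfold Rsqr in H.
  replace (c + - phi) with (c - phi) by ring.
  set (s := sin (c - phi)) in *. set (co := cos (c - phi)) in *.
  assert (E : co * co = 1 - s * s) by lra.
  field_simplify; auto.
  replace (- co ^ 2 * c + co * s - s ^ 2 * c) with (co * s - c*(s*s+co*co)) by ring.
  rewrite H. field. auto.
Qed.

Section Phi.
Variable phi : R.
Hypothesis Hphi : PI/2 < phi < PI.

Lemma fS_S : fS phi (S phi) = 0.
Proof. destruct (S_spec phi Hphi) as [_ E]. unfold fS; lra. Qed.

Lemma fS_pos t : t < S phi -> fS phi t > 0.
Proof. intro. pose proof (fS_decr phi t (S phi) H). rewrite fS_S in H0. lra. Qed.

Lemma fS_neg t : S phi < t -> fS phi t < 0.
Proof. intro. pose proof (fS_decr phi (S phi) t H). rewrite fS_S in H0. lra. Qed.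

Lemma C_mvt x y : 0 <= x -> x < y -> y < phi ->
  exists c, Cfun y phi - Cfun x phi = fS phi c / (2 * sin (c - phi) ^ 2) * (y - x) /\ x < c < y.
Proof.
  intros. apply (MVT_cor2 (fun t => Cfun t phi) (fun c => fS phi c / (2 * sin (c - phi) ^ 2))); auto.
  intros c Hc. apply is_derive_Reals. apply is_derive_C.
  pose proof (sin_neg_lt phi c ltac:(lra) ltac:(lra)). lra.
Qed.

Lemma C_incr x y : 0 <= x -> x < y -> y <= S phi -> Cfun x phi < Cfun y phi.
Proof.
  intros. pose proof (S_spec phi Hphi).
  destruct (C_mvt x y) as [c [E Hc]]; try lra.
  pose proof (fS_pos c ltac:(lra)).
  pose proof (sin_neg_lt phi c ltac:(lra) ltac:(lra)).
  assert (0 < fS phi c / (2 * sin (c - phi) ^ 2)).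
  { apply Rdiv_lt_0_compat; auto. simpl; nra. }
  nra.
Qed.

Lemma C_decr x y : S phi <= x -> x < y -> y < phi -> Cfun y phi < Cfun x phi.
Proof.
  intros. pose proof (S_spec phi Hphi).
  destruct (C_mvt x y) as [c [E Hc]]; try lra.
  pose proof (fS_neg c ltac:(lra)).
  pose proof (sin_neg_lt phi c ltac:(lra) ltac:(lra)).
  assert (fS phi c / (2 * sin (c - phi) ^ 2) < 0).
  { assert (D: 0 < 2 * sin (c-phi)^2) by (simpl; nra). pose proof (Rinv_0_lt_compat _ D).
    unfold Rdiv. nra. }
  nra.
Qed.

Lemma C_0 : Cfun 0 phi = 0.
Proof. unfold Cfun; ring. Qed.

Lemma C_S : Cfun (S phi) phi = M phi.
Proof.
  destruct (S_spec phi Hphi) as [HS E].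
  replace (2 * S phi - 2 * phi) with (2 * (S phi - phi)) in E by ring.
  rewrite sin_2a in E.
  pose proof (sin_neg_lt phi (S phi) ltac:(lra) ltac:(lra)).
  unfold Cfun, M. replace (S phi) with (sin (S phi - phi) * cos (S phi - phi)) at 1 by lra.
  field. lra.
Qed.

Lemma M_pos : 0 < M phi.
Proof. rewrite <- C_S, <- C_0. apply C_incr; pose proof (S_spec phi Hphi); lra. Qed.

Lemma C_le_M t : 0 <= t < phi -> Cfun t phi <= M phi.
Proof.
  intros. rewrite <- C_S. destruct (Rtotal_order t (S phi)) as [h|[h|h]].
  - left; apply C_incr; lra.
  - subst; lra.
  - left; apply C_decr; lra.
Qed.

Lemma C_nonneg t : 0 <= t <= S phi -> 0 <= Cfun t phi.
Proof.
  intros. rewrite <- C_0. destruct (Req_dec t 0). subst; lra.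
  left; apply C_incr; lra.
Qed.

End Phi.

Section Phi2.
Variable phi : R.
Hypothesis Hphi : PI/2 < phi < PI.

Lemma C_cont t : 0 <= t < phi -> continuity_pt (fun t => Cfun t phi) t.
Proof.
  intros. eapply cont_of_derive. apply is_derive_C.
  pose proof (sin_neg_lt phi t ltac:(lra) ltac:(lra)). lra.
Qed.

Lemma C1inv_spec r : 0 < r < M phi -> 0 <= C1inv r phi <= S phi /\ Cfun (C1inv r phi) phi = r.
Proof.
  intros Hr. unfold C1inv. apply epsilon_spec.
  pose proof (S_spec phi Hphi).
  destruct (IVT_interv (fun t => Cfun t phi - r) 0 (S phi)) as [z [Hz Hfz]].
  - intros. apply (continuity_pt_minus (fun t => Cfun t phi) (fun _ => r)).
    apply C_cont; lra. apply continuity_pt_const. intros ? ?; auto.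
  - lra.
  - rewrite C_0; lra.
  - rewrite C_S; lra.
  - exists z. split; [lra|]. lra.
Qed.

Lemma C_unbounded K : 0 < K -> exists y, S phi < y < phi /\ Cfun y phi < - K.
Proof.
  intros HK. pose proof (S_spec phi Hphi).
  set (u := Rmin (1/2) (Rmin (1/(2*K)) ((phi - S phi)/2))).
  assert (Hu1 : u <= 1/2) by (unfold u; apply Rmin_l).
  assert (Hu2 : u <= 1/(2*K)) by (unfold u; eapply Rle_trans; [apply Rmin_r|apply Rmin_l]).
  assert (Hu3 : u <= (phi - S phi)/2) by (unfold u; eapply Rle_trans; [apply Rmin_r|apply Rmin_r]).
  assert (Hu0 : 0 < u).
  { unfold u. apply Rmin_glb_lt; [lra|]. apply Rmin_glb_lt; [|lra].
    apply Rdiv_lt_0_compat; lra. }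
  exists (phi - u). split; [lra|].
  pose proof PI2_3_2.
  assert (Hsu : 0 < sin u < u).
  { split; [apply sin_gt_0; lra| apply sin_lt_x; lra]. }
  assert (Hcu : 7/8 <= cos u).
  { replace u with (2 * (u/2)) by field. rewrite cos_2a_sin.
    pose proof (sin_lt_x (u/2) ltac:(lra)). pose proof (sin_gt_0 (u/2) ltac:(lra) ltac:(lra)).
    unfold Rsqr. nra. }
  assert (HKu : K * u <= 1/2).
  { apply Rmult_le_compat_l with (r := K) in Hu2; [|lra].
    replace (K * (1 / (2 * K))) with (1/2) in Hu2 by (field; lra). lra. }
  unfold Cfun. replace (phi - u - phi) with (- u) by ring.
  rewrite cos_neg, sin_neg.
  set (v := (phi - u) * (cos u / - sin u)).
  assert (Ev : v * sin u = - ((phi - u) * cos u)) by (unfold v; field; lra).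
  nra.
Qed.

Lemma C2inv_spec r : r < M phi -> S phi <= C2inv r phi < phi /\ Cfun (C2inv r phi) phi = r.
Proof.
  intros Hr. unfold C2inv. apply epsilon_spec.
  pose proof (S_spec phi Hphi).
  destruct (C_unbounded (Rabs r + 1)) as [y [Hy Cy]].
  { pose proof (Rabs_pos r); lra. }
  pose proof (Rle_abs (-r)). rewrite Rabs_Ropp in H0.
  destruct (IVT_interv (fun t => r - Cfun t phi) (S phi) y) as [z [Hz Hfz]].
  - intros. apply (continuity_pt_minus (fun _ => r) (fun t => Cfun t phi)).
    apply continuity_pt_const. intros ? ?; auto. apply C_cont; lra.
  - lra.
  - rewrite C_S; auto; lra.
  - lra.
  - exists z. split; [lra|]. lra.
Qed.

End Phi2.

Lemma polar_aux (x y : R) : y <> 0 ->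
  let r := sqrt (x ^ 2 + y ^ 2) in
  0 < r /\ -1 < x / r < 1 /\ sqrt (1 - (x / r)²) = Rabs y / r.
Proof.
  intros Hy r.
  assert (Hy2 : 0 < y ^ 2) by (simpl; nra).
  assert (Hr2 : r * r = x ^ 2 + y ^ 2) by (apply sqrt_sqrt; simpl; nra).
  assert (Hr : 0 < r) by (apply sqrt_lt_R0; simpl; nra).
  assert (Hxr : (x / r)² < 1).
  { unfold Rsqr. replace (x / r * (x / r)) with (x * x / (r * r)) by (field; lra).
    rewrite Hr2. apply Rlt_div_l; simpl; nra. }
  split; auto. split.
  - unfold Rsqr in Hxr. set (q := x / r) in *. split; nra.
  - replace (1 - (x / r)²) with ((Rabs y / r)²).
    + apply sqrt_Rsqr. apply Rdiv_le_0_compat; [apply Rabs_pos|lra].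
    + unfold Rsqr. replace (Rabs y / r * (Rabs y / r)) with (Rabs y * Rabs y / (r * r)) by (field; lra).
      replace (x / r * (x / r)) with (x * x / (r * r)) by (field; lra).
      rewrite <- Rabs_mult. rewrite Rabs_right by nra. rewrite Hr2. field. simpl; nra.
Qed.

Lemma Arg_spec (w : C) : Im w <> 0 ->
  -PI < Arg w <= PI /\ w = (Cmod w * cos (Arg w), Cmod w * sin (Arg w))%R.
Proof.
  intros Hy. unfold Arg. apply epsilon_spec.
  destruct w as [x y]. simpl in Hy. unfold Cmod; simpl fst; simpl snd.
  destruct (polar_aux x y Hy) as [Hr [Hb Hs]].
  set (r := sqrt (x ^ 2 + y ^ 2)) in *.
  pose proof (acos_bound_lt (x / r) Hb).
  assert (Hc : -1 <= x / r <= 1) by lra.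
  destruct (Rlt_dec 0 y).
  - exists (acos (x / r)). split; [lra|].
    rewrite cos_acos, sin_acos, Hs by auto. rewrite Rabs_right by lra.
    f_equal; field; lra.
  - exists (- acos (x / r)). split; [lra|].
    rewrite cos_neg, sin_neg, cos_acos, sin_acos, Hs by auto. rewrite Rabs_left by lra.
    f_equal; field; lra.
Qed.

Lemma Re_Arg (w : C) : Im w <> 0 -> Re w = Cmod w * cos (Rabs (Arg w)).
Proof.
  intros Hy. destruct (Arg_spec w Hy) as [_ E].
  assert (cos (Rabs (Arg w)) = cos (Arg w)).
  { destruct (Rle_dec 0 (Arg w)). rewrite Rabs_right; lra.
    rewrite Rabs_left by lra. apply cos_neg. }
  rewrite H. rewrite E at 1. reflexivity.
Qed.

Lemma acos_lt_iff x y : -1 <= x <= 1 -> -1 <= y <= 1 -> (x < y <-> acos y < acos x).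
Proof.
  intros Hx Hy. pose proof (acos_bound x). pose proof (acos_bound y).
  pose proof (cos_acos x Hx). pose proof (cos_acos y Hy).
  split; intro H3.
  - destruct (Rtotal_order (acos y) (acos x)) as [h|[h|h]]; auto.
    + exfalso. assert (x = y) by (rewrite <- H1, <- H2, h; auto). lra.
    + exfalso. pose proof (cos_decreasing_1 (acos x) (acos y) ltac:(lra) ltac:(lra) ltac:(lra) ltac:(lra) h). lra.
  - pose proof (cos_decreasing_1 (acos y) (acos x) ltac:(lra) ltac:(lra) ltac:(lra) ltac:(lra) H3). lra.
Qed.

Lemma div_cmp_pos a r p : 0 < a -> 0 < r -> 0 < p -> (r < p <-> a / p < a / r).
Proof.
  intros. set (u := a / r). set (v := a / p).
  assert (u * r = a) by (unfold u; field; lra). assert (v * p = a) by (unfold v; field; lra).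
  assert (0 < u) by (unfold u; apply Rdiv_lt_0_compat; lra).
  assert (0 < v) by (unfold v; apply Rdiv_lt_0_compat; lra).
  split; intro; nra.
Qed.

Lemma div_cmp_neg a r p : a < 0 -> 0 < r -> 0 < p -> (r < p <-> a / r < a / p).
Proof.
  intros. set (u := a / r). set (v := a / p).
  assert (u * r = a) by (unfold u; field; lra). assert (v * p = a) by (unfold v; field; lra).
  assert (u < 0) by (unfold u, Rdiv; pose proof (Rinv_0_lt_compat r H0); nra).
  assert (v < 0) by (unfold v, Rdiv; pose proof (Rinv_0_lt_compat p H1); nra).
  split; intro; nra.
Qed.

Lemma rho_acos phi a t : PI/2 < phi < PI -> 0 < t < phi -> Cfun t phi = - a ->
  0 < - t / sin (t - phi) /\ -1 <= a / (- t / sin (t - phi)) <= 1 /\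
  acos (a / (- t / sin (t - phi))) = phi - t.
Proof.
  intros Hp Ht HC. pose proof (sin_neg_lt phi t ltac:(lra) ltac:(lra)).
  assert (E : a / (- t / sin (t - phi)) = cos (phi - t)).
  { replace a with (- Cfun t phi) by lra. unfold Cfun.
    replace (phi - t) with (- (t - phi)) by ring. rewrite cos_neg. field. lra. }
  split; [|split].
  - unfold Rdiv. pose proof (Rinv_lt_0_compat _ H). nra.
  - rewrite E. apply COS_bound.
  - rewrite E. apply acos_cos. lra.
Qed.

Lemma main_phi phi r a : PI/2 < phi < PI -> 0 < r -> r * cos phi < a < r ->
  (/ sqrt (r ^ 2 - a ^ 2) * (phi - acos (a / r)) > 1 <->
     (0 <= a /\ r < R_2 (- a) phi) \/
     (- M phi < a < 0 /\ R_1 (- a) phi < r < R_2 (- a) phi)).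
Proof.
  intros Hp Hr [Ha1 Ha2].
  pose proof (S_spec phi Hp) as HS.
  pose proof (M_pos phi Hp) as HM.
  assert (Hcp : -1 < cos phi).
  { pose proof (cos_decreasing_1 phi PI ltac:(lra) ltac:(lra) ltac:(lra) ltac:(lra) ltac:(lra)).
    rewrite cos_PI in H. lra. }
  assert (Har : cos phi < a / r < 1).
  { set (q := a / r). assert (q * r = a) by (unfold q; field; lra). split; nra. }
  set (al := acos (a / r)).
  assert (Hb : -1 <= a / r <= 1) by lra.
  pose proof (COS_bound phi) as Hcb.
  assert (Hal : 0 < al < phi).
  { split.
    - rewrite <- acos_1. apply (proj1 (acos_lt_iff (a/r) 1 Hb ltac:(lra))); lra.
    - rewrite <- (acos_cos phi) by lra. apply (proj1 (acos_lt_iff (cos phi) (a/r) ltac:(lra) Hb)); lra. }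
  assert (Hco : cos al = a / r) by (apply cos_acos; auto).
  assert (Hs : 0 < sin al) by (apply sin_gt_0; lra).
  assert (Ha : a = r * cos al) by (rewrite Hco; field; lra).
  assert (Hsq : sqrt (r ^ 2 - a ^ 2) = r * sin al).
  { rewrite <- (sqrt_Rsqr (r * sin al)) by nra. f_equal. unfold Rsqr.
    pose proof (sin2_cos2 al). unfold Rsqr in H.
    assert (E : 1 - cos al * cos al = sin al * sin al) by lra.
    rewrite Ha. replace (r ^ 2 - (r * cos al) ^ 2) with (r * r * (1 - cos al * cos al)) by ring.
    rewrite E. ring. }
  rewrite Hsq.
  assert (Ltau : / (r * sin al) * (phi - al) > 1 <-> phi - al > r * sin al).
  { set (D := r * sin al). assert (0 < D) by (unfold D; nra).
    assert (D * / D = 1) by (field; lra). pose proof (Rinv_0_lt_compat D H).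
    split; intro; nra. }
  rewrite Ltau.
  set (th := phi - al).
  assert (Hth : 0 < th < phi) by (unfold th; lra).
  assert (Csin : sin (th - phi) = - sin al) by (unfold th; replace (phi - al - phi) with (- al) by ring; apply sin_neg).
  assert (Ccos : cos (th - phi) = cos al) by (unfold th; replace (phi - al - phi) with (- al) by ring; apply cos_neg).
  assert (HCth : Cfun th phi * sin al = - th * cos al) by (unfold Cfun; rewrite Csin, Ccos; field; lra).
  pose proof (C_le_M phi Hp th ltac:(lra)) as HthM.
  destruct (Rtotal_order a 0) as [Hneg|[Hz|Hpos]].
  -
    assert (Hcn : cos al < 0) by nra.
    assert (LC : th > r * sin al <-> Cfun th phi > - a).
    { rewrite Ha. set (v := Cfun th phi) in *. set (s := sin al) in *. set (co := cos al) in *.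
      split; intro; nra. }
    rewrite LC.
    destruct (Rlt_dec (- a) (M phi)) as [HaM|HaM].
    + destruct (C1inv_spec phi Hp (- a) ltac:(lra)) as [Ht1 C1].
      destruct (C2inv_spec phi Hp (- a) ltac:(lra)) as [Ht2 C2].
      unfold R_1, R_2.
      set (t1 := C1inv (- a) phi) in *. set (t2 := C2inv (- a) phi) in *.
      assert (t1 <> 0) by (intro E; rewrite E, C_0 in C1; lra).
      assert (t1 <> S phi) by (intro E; rewrite E, C_S in C1; lra).
      assert (t2 <> S phi) by (intro E; rewrite E, C_S in C2; lra).
      destruct (rho_acos phi a t1 Hp ltac:(lra) C1) as [P1 [B1 A1]].
      destruct (rho_acos phi a t2 Hp ltac:(lra) C2) as [P2 [B2 A2]].
      set (p1 := - t1 / sin (t1 - phi)) in *. set (p2 := - t2 / sin (t2 - phi)) in *.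
      assert (E2 : r < p2 <-> th < t2).
      { rewrite (div_cmp_neg a r p2) by lra. rewrite (acos_lt_iff (a / r) (a / p2)) by lra.
        rewrite A2. fold al. unfold th; lra. }
      assert (E1 : p1 < r <-> t1 < th).
      { rewrite (div_cmp_neg a p1 r) by lra. rewrite (acos_lt_iff (a / p1) (a / r)) by lra.
        rewrite A1. fold al. unfold th; lra. }
      assert (LL : Cfun th phi > - a <-> t1 < th < t2).
      { destruct (Rle_dec th (S phi)).
        - destruct (Rtotal_order th t1) as [h|[h|h]].
          + pose proof (C_incr phi Hp th t1 ltac:(lra) h ltac:(lra)). split; intros; lra.
          + rewrite h. split; intros; lra.
          + pose proof (C_incr phi Hp t1 th ltac:(lra) h ltac:(lra)). split; intros; lra.
        - destruct (Rtotal_order th t2) as [h|[h|h]].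
          + pose proof (C_decr phi Hp th t2 ltac:(lra) h ltac:(lra)). split; intros; lra.
          + rewrite h. split; intros; lra.
          + pose proof (C_decr phi Hp t2 th ltac:(lra) h ltac:(lra)). split; intros; lra. }
      rewrite LL. split.
      * intros. right. split; [lra|]. split; [apply E1|apply E2]; lra.
      * intros [[? ?]|[? [? ?]]]; [lra|]. split; [apply E1|apply E2]; auto.
    + split.
      * intros. lra.
      * intros [[? ?]|[? ?]]; lra.
  -
    assert (Hal2 : al = PI / 2).
    { unfold al. rewrite Hz. replace (0 / r) with 0 by (field; lra). apply acos_0. }
    rewrite Hal2, sin_PI2. unfold th; rewrite Hal2.
    destruct (C2inv_spec phi Hp (- a) ltac:(lra)) as [Ht2 C2].
    unfold R_2. set (t2 := C2inv (- a) phi) in *.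
    destruct (rho_acos phi a t2 Hp ltac:(lra) C2) as [P2 [B2 A2]].
    rewrite Hz in A2. replace (0 / (- t2 / sin (t2 - phi))) with 0 in A2 by (unfold Rdiv; ring).
    rewrite acos_0 in A2.
    assert (Et2 : t2 = phi - PI / 2) by lra.
    assert (Ep : - t2 / sin (t2 - phi) = t2).
    { replace (t2 - phi) with (- (PI / 2)) by lra. rewrite sin_neg, sin_PI2. field. }
    rewrite Ep. split.
    + intros. left. split; lra.
    + intros [[? ?]|[? ?]]; lra.
  -
    assert (Hcp' : 0 < cos al) by nra.
    assert (LC : th > r * sin al <-> Cfun th phi < - a).
    { rewrite Ha. set (v := Cfun th phi) in *. set (s := sin al) in *. set (co := cos al) in *.
      split; intro; nra. }
    rewrite LC.
    destruct (C2inv_spec phi Hp (- a) ltac:(lra)) as [Ht2 C2].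
    unfold R_2. set (t2 := C2inv (- a) phi) in *.
    assert (t2 <> S phi) by (intro E; rewrite E, C_S in C2; lra).
    destruct (rho_acos phi a t2 Hp ltac:(lra) C2) as [P2 [B2 A2]].
    set (p2 := - t2 / sin (t2 - phi)) in *.
    assert (E2 : r < p2 <-> t2 < th).
    { rewrite (div_cmp_pos a r p2) by lra. rewrite (acos_lt_iff (a / p2) (a / r)) by lra.
      rewrite A2. fold al. unfold th; lra. }
    assert (LL : Cfun th phi < - a <-> t2 < th).
    { destruct (Rle_dec th (S phi)).
      - pose proof (C_nonneg phi Hp th ltac:(lra)). split; intros; lra.
      - destruct (Rtotal_order th t2) as [h|[h|h]].
        + pose proof (C_decr phi Hp th t2 ltac:(lra) h ltac:(lra)). split; intros; lra.
        + rewrite h. split; intros; lra.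
        + pose proof (C_decr phi Hp t2 th ltac:(lra) h ltac:(lra)). split; intros; lra. }
    rewrite LL. split.
    + intros. left. split; [lra|]. apply E2; auto.
    + intros [[? ?]|[? ?]]; [apply E2; auto|lra].
Qed.

Theorem mainTheorem15 (a : R) (w : C) :
  Im w <> 0 ->
  D_c a w ->
  PI / 2 < Rabs (Arg w) < PI ->
  (tau_c a w > 1 <->
     (0 <= a /\ Cmod w < R_2 (- a) (Rabs (Arg w))) \/
     (- M (Rabs (Arg w)) < a < 0 /\
        R_1 (- a) (Rabs (Arg w)) < Cmod w < R_2 (- a) (Rabs (Arg w)))).
Proof.
  intros Hy [Hw [H1 H2]] Hp. unfold tau_c.
  rewrite (Re_Arg w Hy) in H1.
  pose proof (Cmod_ge_0 w).
  apply main_phi; auto.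
  destruct H; auto. rewrite <- H in H1, H2. lra.
Qed.
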